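(* Let $K$ be a field and $(Q,f,g,c,W)$ as in the setting below, with completed Jacobian algebra $\Lambda$, and assume that either $Q$ satisfies $(\star)$, or $Q$ satisfies $(\diamond)$ and $\prod_{\alpha\in\Omega}c_\alpha\neq1$ for $\Omega$ a set of representatives of the $g$-orbits. Then for every $i\in Q_0$ and every $\alpha\in Q_1$ we have $\alpha\cdot z_i=0$ and $z_i\cdot\alpha=0$ in $\Lambda$.
   Context: Setting: $Q$ is a finite quiver with vertex set $Q_0$ and arrow set $Q_1$, connected, without loops or $2$-cycles, every vertex being the source of exactly two arrows and the target of exactly two arrows, equipped with bijections $f,g:Q_1\to Q_1$ such that for each $\alpha$, $\{f(\alpha),g(\alpha)\}$ is the set of the two arrows starting at the target of $\alpha$, and $f^3=\mathrm{id}$. $n_\alpha$ is the size of the $g$-orbit of $\alpha$. $c:Q_1\to K^\times$ is constant on $g$-orbits. Paths compose left to right. $W=\sum_\alpha \alpha\cdot f(\alpha)\cdot f^2(\alpha)-\sum_\beta c_\beta\,\beta\cdot g(\beta)\cdots g^{n_\beta-1}(\beta)$ (sums over representatives of $f$-orbits, resp. $g$-orbits). $\Lambda$ is the completed Jacobian algebra of $(Q,W)$. For $i\in Q_0$, $z_i$ is the image in $\Lambda$ of $\alpha\cdot f(\alpha)\cdot f^2(\alpha)$ for an arrow $\alpha$ starting at $i$ (independent of the choice of $\alpha$ in $\Lambda$). $(\star)$: for every $\alpha$, $n_\alpha\ge4$ or $n_{f(\alpha)}\ge4$. $(\diamond)$: $n_\alpha=3$ for all $\alpha$. *)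

(* Defs.v *)
From HB Require Import structures.
From mathcomp Require Import all_boot all_order all_algebra.
Set Implicit Arguments. Unset Strict Implicit. Unset Printing Implicit Defensive.
Import GRing.Theory.
Local Open Scope ring_scope.

(* Paths compose left to
   right.  A (possibly invalid) "path word" is a pair (v, p) : V * seq A,
   meant as the path starting at vertex v followed by the arrows of p
   ((v, [::]) is the trivial path e_v).  Elements of the completed path
   algebra K<<Q>> are arbitrary (possibly infinite-support) K-valued
   functions on valid paths. *)

Section PathAlgebra.
Variables (K : fieldType) (V A : finType) (s t : A -> V).

Fixpoint valid_from (v : V) (p : seq A) : bool :=
  if p is a :: p' then (s a == v) && valid_from (t a) p' else true.

Definition elt := (V * seq A)%type -> K.

Definition is_elt (x : elt) : Prop :=
  forall q : V * seq A, ~~ valid_from q.1 q.2 -> x q = 0.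

Definition endv (v : V) (p : seq A) : V := last v (map t p).

Definition pathel (v : V) (p : seq A) : elt :=
  fun q => if q == (v, p) then 1 else 0.

Definition emul (x y : elt) : elt :=
  fun q => \sum_(k < (size q.2).+1)
             x (q.1, take k q.2) * y (endv q.1 (take k q.2), drop k q.2).

(* cyclic derivative with respect to the arrow gam of the cycle
   cyc = a_0 ... a_{m-1}:  sum over k with a_k = gam of a_{k+1}...a_{k-1} *)
Definition cycder (cyc : seq A) (gam : A) : elt :=
  fun q => \sum_(k < size cyc | nth gam cyc k == gam)
             pathel (t gam) (take (size cyc).-1 (rot k.+1 cyc)) q.

(* cyclic derivative d_gam W of the potential
   W = sum_{f-orbit reps a} a f(a) f^2(a)
       - sum_{g-orbit reps b} c_b b g(b) ... g^{n_b - 1}(b) *)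
Definition dW (f g : A -> A) (c : A -> K) (gam : A) : elt :=
  fun q => \sum_(a | froot f a == a) cycder [:: a; f a; f (f a)] gam q
         - \sum_(b | froot g b == b) c b * cycder (traject g b (order g b)) gam q.

Definition in_gen_ideal f g c (x : elt) : Prop :=
  exists (n : nat) (a b : 'I_n -> elt) (gam : 'I_n -> A),
    (forall k, is_elt (a k) /\ is_elt (b k)) /\
    forall q, x q = \sum_(k < n) emul (emul (a k) (dW f g c (gam k))) (b k) q.

(* x lies in the closure J(W) of that ideal for the m-adic topology
   (m = arrow ideal; m^n = elements supported on paths of length >= n).
   Then x = 0 in the completed Jacobian algebra Lambda = K<<Q>>/J(W). *)
Definition in_jacobian_ideal f g c (x : elt) : Prop :=
  forall n : nat, exists y : elt, in_gen_ideal f g c y /\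
    forall q : V * seq A, (size q.2 < n)%N -> x q = y q.

(* the representative alpha f(alpha) f^2(alpha) of z_i, for alpha starting at i *)
Definition zrep (f : A -> A) (al : A) : elt := pathel (s al) [:: al; f al; f (f al)].
End PathAlgebra.

Definition quiver_setting (K : fieldType) (V A : finType) (s t : A -> V)
    (f g : A -> A) (c : A -> K) : Prop :=
  [/\
      forall u v : V, connect (fun x y => [exists a : A,
             ((s a == x) && (t a == y)) || ((s a == y) && (t a == x))]) u v,
      forall a : A, s a != t a,
      forall a b : A, ~ (s a = t b /\ t a = s b),
      forall v : V, #|[set a | s a == v]| = 2 /\ #|[set a | t a == v]| = 2 &
      [/\ injective f, injective g,
          forall a : A, [/\ s (f a) = t a, s (g a) = t a & f a != g a],
          forall a : A, f (f (f a)) = a &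
          forall a : A, c a != 0 /\ c (g a) = c a]].

(* Main.v *)
Require Import Defs.
From HB Require Import structures.
From mathcomp Require Import all_boot all_order all_algebra.
From mathcomp Require Import zify ring.
Set Implicit Arguments. Unset Strict Implicit. Unset Printing Implicit Defensive.
Import GRing.Theory.
Local Open Scope ring_scope.

Section Alg.
Variables (K : fieldType) (V A : finType) (s t : A -> V).

Definition vp (v : V) (p : seq A) : elt K V A :=
  fun q => if valid_from s t v p && (q == (v, p)) then 1 else 0.

Lemma endv_cat v p r : endv t v (p ++ r) = endv t (endv t v p) r.
Proof. by rewrite /endv map_cat last_cat. Qed.

Lemma endv_cons v a p : endv t v (a :: p) = endv t (t a) p.
Proof. by []. Qed.

Lemma valid_cat v p r :
  valid_from s t v (p ++ r) = valid_from s t v p && valid_from s t (endv t v p) r.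
Proof. by elim: p v => [|a p IH] v //=; rewrite IH andbA. Qed.

Lemma sum_single n (F : 'I_n -> K) (k0 : 'I_n) :
  (forall k, F k != 0 -> k = k0) -> \sum_(k < n) F k = F k0.
Proof.
move=> H; rewrite (bigD1 k0) //= big1 ?addr0 // => k nk.
by apply/eqP; apply: contraNT nk => /H ->.
Qed.

Lemma sum_zero n (F : 'I_n -> K) : (forall k, F k = 0) -> \sum_(k < n) F k = 0.
Proof. by move=> H; rewrite big1. Qed.

Lemma emul_vp v p w r q :
  emul t (vp v p) (vp w r) q = if endv t v p == w then vp v (p ++ r) q else 0.
Proof.
case: q => v' r'; rewrite /emul /=.
have term k : vp v p (v', take k r') * vp w r (endv t v' (take k r'), drop k r') != 0 ->
   [/\ v' = v, take k r' = p, endv t v p = w, drop k r' = r & valid_from s t v p && valid_from s t w r].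
  rewrite /vp; case Hv: (valid_from s t v p); last by rewrite mul0r eqxx.
  case: ((v', take k r') =P (v, p)) => [[-> tk]|_]; last by rewrite mul0r eqxx.
  case Hw: (valid_from s t w r); last by rewrite mulr0 eqxx.
  case: ((endv t v (take k r'), drop k r') =P (w, r)) => [[ew dk]|_]; last by rewrite mulr0 eqxx.
  by move=> _; rewrite -tk; split.
case E: ((endv t v p == w) && ((v', r') == (v, p ++ r))).
- case/andP: E => /eqP Ew /eqP [Ev Er]; move: term; rewrite Ev Er => term.
  have lt : (size p < (size (p ++ r)).+1)%N by rewrite size_cat ltnS leq_addr.
  rewrite Ew eqxx (sum_single (k0 := Ordinal lt)) /=.
  + rewrite take_size_cat // drop_size_cat // Ew /vp valid_cat Ew !eqxx /=.
    by case: (valid_from s t v p); case: (valid_from s t w r); rewrite ?mulr1 ?mulr0 ?mul0r.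
  + move=> k Hk; have [_ tk _ _ _] := term k Hk; apply: val_inj => /=.
    have := congr1 size tk; have := ltn_ord k; move: (nat_of_ord k) => n.
    rewrite size_take size_cat ltnS; case: ltnP => ? ? ?; lia.
- rewrite sum_zero.
  + case: eqP E => //= Ew E; rewrite /vp; case: (valid_from _ _ _ _) => //=.
    by rewrite E.
  + move=> k; apply/eqP; apply: contraFT E => /term [-> tk Ew dk _].
    by rewrite Ew eqxx /= -tk -dk cat_take_drop.
Qed.

End Alg.


Section Orb.
Variables (T : finType) (h : T -> T).
Hypothesis hinj : injective h.

Lemma conn_sym : connect_sym (coerced_frel h).
Proof. by move=> x y; apply: fconnect_sym. Qed.

Lemma order_conn x y : fconnect h x y -> order h x = order h y.
Proof. by move=> xy; apply: eq_card => z; apply: (same_connect conn_sym xy). Qed.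

Lemma order_h x : order h (h x) = order h x.
Proof. by symmetry; apply: order_conn; apply: fconnect1. Qed.

Lemma order_iter n x : order h (iter n h x) = order h x.
Proof. by symmetry; apply: order_conn; apply: fconnect_iter. Qed.

Lemma iter_orderD x k : iter (order h x + k) h x = iter k h x.
Proof. by rewrite addnC iterD iter_order. Qed.

Lemma rot_traject x k : (k <= order h x)%N ->
  rot k (traject h x (order h x)) = traject h (iter k h x) (order h x).
Proof.
move=> kn.
have e : iter (order h x - k) h (iter k h x) = x by rewrite -iterD subnK // iter_order.
rewrite -{1}(subnKC kn) trajectD /rot take_size_cat ?size_traject //.
by rewrite drop_size_cat ?size_traject // -[in RHS](subnK kn) trajectD e.
Qed.

Lemma root_rep x : froot h (froot h x) == froot h x.
Proof. by rewrite (root_root conn_sym). Qed.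

Lemma conn_root x : fconnect h (froot h x) x.
Proof. by rewrite conn_sym connect_root. Qed.

Lemma rep_eq b x : froot h b == b -> fconnect h b x -> b = froot h x.
Proof. move=> /eqP rb bx; rewrite -{1}rb; exact: (elimT (fingraph.rootP conn_sym) bx). Qed.

End Orb.


Section Dia.
Variables (V A : finType) (s t : A -> V) (f g : A -> A).
Hypothesis Hf3 : forall a, f (f (f a)) = a.
Hypothesis Hg3 : forall a, g (g (g a)) = a.
Hypothesis Hnl : forall a, s a != t a.
Hypothesis Hsf : forall a, s (f a) = t a.
Hypothesis Hsg : forall a, s (g a) = t a.
Hypothesis Hfg : forall a, f a != g a.
Hypothesis Hout : forall v, #|[set a | s a == v]| = 2.

Lemma out2' a y : s y = t a -> y = f a \/ y = g a.
Proof.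
move=> sy; have /cards2P [x1 [x2 [nx e]]] : #|[set z | s z == t a]| == 2 by rewrite Hout.
have : f a \in [set z | s z == t a] by rewrite inE Hsf.
have : g a \in [set z | s z == t a] by rewrite inE Hsg.
have : y \in [set z | s z == t a] by rewrite inE sy.
rewrite e !inE => /orP [] /eqP Ey /orP [] /eqP Eg /orP [] /eqP Ef;
  move: (Hfg a) nx; rewrite Ey Eg Ef ?eqxx //; auto.
Qed.

Lemma finj' : injective f.
Proof. by apply: (can_inj (g := fun x => f (f x))) => x; rewrite Hf3. Qed.

Lemma nf_ffg x : f (f (g x)) = x -> False.
Proof.
move=> e; have := congr1 f e; rewrite Hf3 => e2; move: (Hfg x); by rewrite e2 eqxx.
Qed.

Lemma nf_f x : f x = x -> False.
Proof. by move=> e; move: (Hnl x); rewrite -{1}e Hsf eqxx. Qed.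

Lemma nf_ff x : f (f x) = x -> False.
Proof. by move=> e; have := congr1 f e; rewrite Hf3 => e2; apply: (@nf_f x (esym e2)). Qed.

Lemma h2 x : f (f (g (f (f (g x))))) = x.
Proof.
set y := f (f (g x)); set z := f (f (g y)).
have ty : t y = t x by rewrite /y -Hsf Hf3 Hsg.
have tz : t z = t x by rewrite /z -Hsf Hf3 Hsg ty.
have yx : y != x by apply/eqP; apply: nf_ffg.
have zy : z != y by apply/eqP; apply: nf_ffg.
have fy : f y = g x.
  have : s (f y) = t x by rewrite Hsf ty.
  case/out2' => // E; move: yx; by rewrite (finj' E) eqxx.
have : s (f z) = t x by rewrite Hsf tz.
case/out2' => E; first exact: finj'.
move: zy; by rewrite -fy in E; rewrite (finj' E) eqxx.
Qed.

Lemma gffg y : g (f (f (g y))) = f y.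
Proof. by rewrite -{1}(Hf3 (g (f (f (g y))))) h2. Qed.

Lemma r3 x : g (f (f x)) = f (g (g x)).
Proof. by rewrite -{1}(Hg3 x) gffg. Qed.

Lemma r4 x : g (g (f x)) = f (f (g x)).
Proof. by rewrite -(gffg x) Hg3. Qed.

Lemma r5 x : g (f (g x)) = f (g (f x)).
Proof. by rewrite -(gffg (g (f x))) r4 Hf3. Qed.

Ltac norm := repeat first [rewrite Hf3 | rewrite Hg3 | rewrite r3 | rewrite r4 | rewrite r5].

Definition bw1 a := f (f a).
Definition bw2 a := f (f (g (g (f (f a))))).
Definition bw3 a := f (f (g (f (f a)))).
Definition bw4 a := f (f (g (g (f (f (g (f (f a)))))))).

Lemma dist12 a k : (k < 3)%N -> iter k g (bw1 a) != bw2 a.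
Proof.
rewrite /bw1 /bw2 /bw3 /bw4.
case: k => [|[|[|k]]] // _ /=; apply/eqP => E.
- apply: (@nf_ff (g (g a))); move: (congr1 (fun x => f (g x)) E) => /=; norm; by [].
- apply: (@nf_ffg (a)); move: (congr1 (fun x => f (g (f x))) E) => /=; norm; by [].
- apply: (@nf_f (g (f a))); move: (congr1 (fun x => f (f x)) E) => /=; norm; by [].
Qed.

Lemma dist13 a k : (k < 3)%N -> iter k g (bw1 a) != bw3 a.
Proof.
rewrite /bw1 /bw2 /bw3 /bw4.
case: k => [|[|[|k]]] // _ /=; apply/eqP => E.
- apply: (@nf_ffg (f (f a))); move: (congr1 (fun x => f (f (g x))) E) => /=; norm; by [].
- apply: (@nf_f (g (g a))); move: (congr1 (fun x => x) E) => /=; norm; by [].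
- apply: (@nf_ff (a)); move: (congr1 (fun x => g x) E) => /=; norm; by [].
Qed.

Lemma dist14 a k : (k < 3)%N -> iter k g (bw1 a) != bw4 a.
Proof.
rewrite /bw1 /bw2 /bw3 /bw4.
case: k => [|[|[|k]]] // _ /=; apply/eqP => E.
- apply: (@nf_ff (g (f a))); move: (congr1 (fun x => g (g x)) E) => /=; norm; by [].
- apply: (@nf_ffg (f a)); move: (congr1 (fun x => g x) E) => /=; norm; by [].
- apply: (@nf_f (a)); move: (congr1 (fun x => f (f (g x))) E) => /=; norm; by [].
Qed.

Lemma dist23 a k : (k < 3)%N -> iter k g (bw2 a) != bw3 a.
Proof.
rewrite /bw1 /bw2 /bw3 /bw4.
case: k => [|[|[|k]]] // _ /=; apply/eqP => E.
- apply: (@nf_f (g a)); move: (congr1 (fun x => g (g x)) E) => /=; norm; by [].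
- apply: (@nf_ff (g (g a))); move: (congr1 (fun x => x) E) => /=; norm; by [].
- apply: (@nf_ffg (f a)); move: (congr1 (fun x => f (g x)) E) => /=; norm; by [].
Qed.

Lemma dist24 a k : (k < 3)%N -> iter k g (bw2 a) != bw4 a.
Proof.
rewrite /bw1 /bw2 /bw3 /bw4.
case: k => [|[|[|k]]] // _ /=; apply/eqP => E.
- apply: (@nf_ffg (f (f a))); move: (congr1 (fun x => f (g x)) E) => /=; norm; by [].
- apply: (@nf_f (g (f a))); move: (congr1 (fun x => g (g x)) E) => /=; norm; by [].
- apply: (@nf_ff (g a)); move: (congr1 (fun x => f x) E) => /=; norm; by [].
Qed.

Lemma dist34 a k : (k < 3)%N -> iter k g (bw3 a) != bw4 a.
Proof.
rewrite /bw1 /bw2 /bw3 /bw4.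
case: k => [|[|[|k]]] // _ /=; apply/eqP => E.
- apply: (@nf_ff (a)); move: (congr1 (fun x => f (f (g x))) E) => /=; norm; by [].
- apply: (@nf_ffg (a)); move: (congr1 (fun x => f (f (g x))) E) => /=; norm; by [].
- apply: (@nf_f (g a)); move: (congr1 (fun x => f x) E) => /=; norm; by [].
Qed.

Lemma clo10 a : f (iter 0 g (bw1 a)) = iter 1 g (bw3 a).
Proof. by rewrite /bw1 /bw2 /bw3 /bw4 /=; norm. Qed.

Lemma clo11 a : f (iter 1 g (bw1 a)) = iter 1 g (bw2 a).
Proof. by rewrite /bw1 /bw2 /bw3 /bw4 /=; norm. Qed.

Lemma clo12 a : f (iter 2 g (bw1 a)) = iter 2 g (bw4 a).
Proof. by rewrite /bw1 /bw2 /bw3 /bw4 /=; norm. Qed.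

Lemma clo20 a : f (iter 0 g (bw2 a)) = iter 2 g (bw1 a).
Proof. by rewrite /bw1 /bw2 /bw3 /bw4 /=; norm. Qed.

Lemma clo21 a : f (iter 1 g (bw2 a)) = iter 0 g (bw3 a).
Proof. by rewrite /bw1 /bw2 /bw3 /bw4 /=; norm. Qed.

Lemma clo22 a : f (iter 2 g (bw2 a)) = iter 0 g (bw4 a).
Proof. by rewrite /bw1 /bw2 /bw3 /bw4 /=; norm. Qed.

Lemma clo30 a : f (iter 0 g (bw3 a)) = iter 1 g (bw1 a).
Proof. by rewrite /bw1 /bw2 /bw3 /bw4 /=; norm. Qed.

Lemma clo31 a : f (iter 1 g (bw3 a)) = iter 1 g (bw4 a).
Proof. by rewrite /bw1 /bw2 /bw3 /bw4 /=; norm. Qed.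

Lemma clo32 a : f (iter 2 g (bw3 a)) = iter 2 g (bw2 a).
Proof. by rewrite /bw1 /bw2 /bw3 /bw4 /=; norm. Qed.

Lemma clo40 a : f (iter 0 g (bw4 a)) = iter 2 g (bw3 a).
Proof. by rewrite /bw1 /bw2 /bw3 /bw4 /=; norm. Qed.

Lemma clo41 a : f (iter 1 g (bw4 a)) = iter 0 g (bw1 a).
Proof. by rewrite /bw1 /bw2 /bw3 /bw4 /=; norm. Qed.

Lemma clo42 a : f (iter 2 g (bw4 a)) = iter 0 g (bw2 a).
Proof. by rewrite /bw1 /bw2 /bw3 /bw4 /=; norm. Qed.
Lemma ginj' : injective g.
Proof. by apply: (can_inj (g := fun x => g (g x))) => x; rewrite Hg3. Qed.

Hypothesis Hord3 : forall a, order g a = 3%N.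

Lemma conn_it x b : fconnect g x b -> exists2 k, (k < 3)%N & b = iter k g x.
Proof.
move=> xb; exists (findex g x b); last by rewrite iter_findex.
by rewrite -(Hord3 x); apply: findex_max.
Qed.

Definition inU a b := [|| fconnect g (bw1 a) b, fconnect g (bw2 a) b,
   fconnect g (bw3 a) b | fconnect g (bw4 a) b].

Lemma inU_g a b : inU a b -> inU a (g b).
Proof.
have H x : fconnect g x b -> fconnect g x (g b).
  by move=> xb; apply: connect_trans xb (fconnect1 _ _).
by rewrite /inU; case/or4P => /H ->; rewrite ?orbT.
Qed.

Lemma inU_f a b : inU a b -> inU a (f b).
Proof.
case/or4P => /conn_it [k kl ->]; case: k kl => [|[|[|k]]] kl; try by [].
1: rewrite (clo10 a).
2: rewrite (clo11 a).
3: rewrite (clo12 a).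
4: rewrite (clo20 a).
5: rewrite (clo21 a).
6: rewrite (clo22 a).
7: rewrite (clo30 a).
8: rewrite (clo31 a).
9: rewrite (clo32 a).
10: rewrite (clo40 a).
11: rewrite (clo41 a).
12: rewrite (clo42 a).
all: by rewrite /inU fconnect_iter ?orbT.
Qed.

Lemma inU_out a y x : inU a y -> s x = s y -> inU a x.
Proof.
move=> Uy sx; have : s x = t (f (f y)) by rewrite -Hsf Hf3.
case/out2' => ->; first by rewrite Hf3.
by apply: inU_g; apply: inU_f; apply: inU_f.
Qed.

Lemma inU_a a : inU a a.
Proof.
have : inU a (f (bw1 a)) by apply: inU_f; rewrite /inU connect0.
by rewrite /bw1 Hf3.
Qed.

Lemma conn_ind (T : finType) (e : rel T) (P : pred T) u v :
  connect e u v -> P u -> (forall x y, e x y -> P x -> P y) -> P v.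
Proof.
move=> /connectP [p pth ->] Pu H; elim: p u pth Pu => //= y p IH u /andP [euy pth] Pu.
exact: (IH y pth (H _ _ euy Pu)).
Qed.

Hypothesis Hconn : forall u v : V, connect (fun x y => [exists a : A,
             ((s a == x) && (t a == y)) || ((s a == y) && (t a == x))]) u v.

Lemma inU_all a b : inU a b.
Proof.
pose W := [pred v | [exists y, inU a y && (s y == v)]].
have Wb : W (s b).
  apply: (conn_ind (Hconn (s a) (s b))).
    by apply/existsP; exists a; rewrite inU_a eqxx.
  move=> x y /existsP [a0 /orP [] /andP [/eqP sa /eqP ta]] /existsP [y0 /andP [Uy /eqP sy]].
  - apply/existsP; exists (f a0); rewrite Hsf ta eqxx andbT.
    by apply: inU_f; apply: inU_out Uy _; rewrite sa.
  - apply/existsP; exists a0; rewrite sa eqxx andbT.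
    have Ufa : inU a (f a0) by apply: inU_out Uy _; rewrite Hsf ta.
    by have := inU_f (inU_f Ufa); rewrite Hf3.
by case/existsP: Wb => y /andP [Uy /eqP sy]; apply: inU_out Uy _.
Qed.

Variables (K : fieldType) (c : A -> K).
Hypothesis Hc : forall a, c (g a) = c a.

Lemma c_froot x : c (froot g x) = c x.
Proof.
have [k _ ->] := conn_it (connect_root _ x).
by elim: k => //= k IH; rewrite Hc.
Qed.

Lemma root_ne x y : froot g x = froot g y -> exists2 k, (k < 3)%N & y = iter k g x.
Proof. by move/(fingraph.rootP (conn_sym ginj')); apply: conn_it. Qed.

Lemma prod_reps a :
  \prod_(b | froot g b == b) c b = c (bw1 a) * c (bw2 a) * c (bw3 a) * c (bw4 a).
Proof.
set r := [:: froot g (bw1 a); froot g (bw2 a); froot g (bw3 a); froot g (bw4 a)].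
have ne i j (d : forall k, (k < 3)%N -> iter k g i != j) : froot g i != froot g j.
  by apply/eqP => /root_ne [k kl E]; move: (d k kl); rewrite E eqxx.
have ur : uniq r.
  rewrite /r /= !inE !negb_or !ne ?andbT //; move=> k kl;
  by [apply: dist12 | apply: dist13 | apply: dist14 | apply: dist23 | apply: dist24 | apply: dist34].
have mr b : (froot g b == b) = (b \in r).
  apply/idP/idP => [rb|].
    have cs := conn_sym ginj'.
    rewrite /r !inE; case/or4P: (inU_all a b) => H; rewrite cs in H;
      by rewrite -(rep_eq ginj' rb H) eqxx ?orbT.
  by rewrite /r !inE => /or4P [] /eqP ->; apply: (root_rep ginj').
rewrite -big_filter (perm_big r); last first.
  apply: uniq_perm => //; first by rewrite filter_uniq // index_enum_uniq.
  by move=> b; rewrite mem_filter mem_index_enum andbT mr.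
by rewrite /r !big_cons big_nil !c_froot /= mulr1 !mulrA.
Qed.

End Dia.


Section DW.
Variables (K : fieldType) (V A : finType) (s t : A -> V) (f g : A -> A) (c : A -> K).
Hypothesis Hf3 : forall a, f (f (f a)) = a.
Hypothesis Hginj : injective g.
Hypothesis Hnl : forall a, s a != t a.
Hypothesis Hsf : forall a, s (f a) = t a.
Hypothesis Hsg : forall a, s (g a) = t a.
Hypothesis Hfg : forall a, f a != g a.
Hypothesis Hc : forall a, c (g a) = c a.
Hypothesis Hout : forall v, #|[set a | s a == v]| = 2.
Hypothesis H2c : forall a b, ~ (s a = t b /\ t a = s b).
Hypothesis Hconn : forall u v : V, connect (fun x y => [exists a : A,
             ((s a == x) && (t a == y)) || ((s a == y) && (t a == x))]) u v.

Lemma finj : injective f.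
Proof. by apply: (can_inj (g := fun x => f (f x))) => x; rewrite Hf3. Qed.

Lemma f1 a : f a != a.
Proof. by apply: contraNneq (Hnl a) => e; rewrite -{1}e Hsf. Qed.

Lemma f2 a : f (f a) != a.
Proof. by apply: contraNneq (f1 a) => e; have := congr1 f e; rewrite Hf3 => <-. Qed.

Definition Aw (x : A) := [:: f x; f (f x)].
Definition Bw (x : A) := traject g (g x) (order g x).-1.

Lemma pathel_vp v p q : valid_from s t v p -> pathel K v p q = vp K s t v p q.
Proof. by move=> vl; rewrite /pathel /vp vl. Qed.

Lemma valid_Aw x : valid_from s t (t x) (Aw x).
Proof. by rewrite /= !Hsf !eqxx. Qed.

Lemma valid_traj x n : valid_from s t (t x) (traject g (g x) n).
Proof. by elim: n x => //= n IH x; rewrite Hsg eqxx IH. Qed.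

Lemma iter3 n x : [\/ iter n f x = x, iter n f x = f x | iter n f x = f (f x)].
Proof.
elim: n => [|n [] IH] /=; [by constructor 1 | by constructor 2; rewrite IH
  | by constructor 3; rewrite IH | by constructor 1; rewrite IH Hf3].
Qed.

Lemma cyc0 x y z q : y != x -> z != x ->
  cycder K t [:: x; y; z] x q = pathel K (t x) [:: y; z] q.
Proof.
move=> yx zx; rewrite /cycder big_mkcond !big_ord_recl big_ord0 /=.
by rewrite eqxx (negbTE yx) (negbTE zx) !addr0.
Qed.

Lemma cyc1 x y z q : y != x -> z != x ->
  cycder K t [:: z; x; y] x q = pathel K (t x) [:: y; z] q.
Proof.
move=> yx zx; rewrite /cycder big_mkcond !big_ord_recl big_ord0 /=.
by rewrite eqxx (negbTE yx) (negbTE zx) !addr0 add0r.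
Qed.

Lemma cyc2 x y z q : y != x -> z != x ->
  cycder K t [:: y; z; x] x q = pathel K (t x) [:: y; z] q.
Proof.
move=> yx zx; rewrite /cycder big_mkcond !big_ord_recl big_ord0 /=.
by rewrite eqxx (negbTE yx) (negbTE zx) !addr0 !add0r.
Qed.

Lemma fpart x q : \sum_(a | froot f a == a) cycder K t [:: a; f a; f (f a)] x q
   = pathel K (t x) (Aw x) q.
Proof.
have fi := finj.
rewrite (bigD1 (froot f x)) ?(root_rep fi) //= big1 ?addr0.
- have := conn_root fi x; set a0 := froot f x => /iter_findex <-.
  case: (iter3 (findex f a0 x) a0) => ->.
  + by rewrite cyc0 // ?f1 ?f2.
  + by rewrite cyc1 /Aw ?Hf3 // ?f1 // eq_sym f1.
  + by rewrite cyc2 /Aw ?Hf3 // 1?eq_sym ?f2 // f1.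
- move=> a /andP [ra na]; rewrite /cycder big1 // => k /eqP nk.
  exfalso; move/negP: na; apply.
  have : nth x [:: a; f a; f (f a)] k \in [:: a; f a; f (f a)] by rewrite mem_nth.
  rewrite nk => xin; apply/eqP; apply: (rep_eq fi ra).
  move: xin; rewrite !inE => /or3P [] /eqP ->.
  + exact: connect0.
  + exact: fconnect1.
  + exact: (fconnect_iter _ 2).
Qed.

Lemma c_iter n x : c (iter n g x) = c x.
Proof. by elim: n => //= n IH; rewrite Hc. Qed.

Lemma gpart x q :
  \sum_(b | froot g b == b) c b * cycder K t (traject g b (order g b)) x q
   = c x * pathel K (t x) (Bw x) q.
Proof.
rewrite (bigD1 (froot g x)) ?(root_rep Hginj) //= big1 ?addr0.
- have := conn_root Hginj x; set b0 := froot g x => b0x.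
  have ex := iter_findex b0x; have jlt := findex_max b0x.
  set j := findex g b0 x in ex jlt.
  have on := order_conn Hginj b0x.
  have -> : c x = c b0 by rewrite -ex c_iter.
  congr (_ * _).
  have jlt' : (j < size (traject g b0 (order g b0)))%N by rewrite size_traject.
  rewrite /cycder (bigD1 (Ordinal jlt')) /=; last by rewrite (set_nth_default b0) ?nth_traject // ex.
  rewrite big1 ?addr0.
  + rewrite size_traject rot_traject // iterS ex /Bw on take_traject //.
    exact: leq_pred.
  + move=> k /andP [/eqP nk kj]; exfalso; move/negP: kj; apply.
    apply/eqP/val_inj => /=.
    have u := orbit_uniq g b0; rewrite /orbit in u.
    have := index_uniq x (ltn_ord k) u; rewrite nk => <-.
    by [].
- move=> b /andP [rb nb]; rewrite /cycder big1 ?mulr0 // => k /eqP nk.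
  exfalso; move/negP: nb; apply.
  have : nth x (traject g b (order g b)) k \in traject g b (order g b) by rewrite mem_nth.
  rewrite nk => xin; apply/eqP; apply: (rep_eq Hginj rb).
  by rewrite fconnect_orbit.
Qed.

Lemma dW_eq x q : dW t f g c x q =
  vp K s t (t x) (Aw x) q - c x * vp K s t (t x) (Bw x) q.
Proof.
by rewrite /dW fpart gpart !pathel_vp ?valid_Aw //; apply: valid_traj.
Qed.

Local Notation vpp := (vp K s t).
Local Notation elt := (elt K V A).



Lemma emul_scalel a (x y : elt) q :
  emul t (fun q => a * x q) y q = a * emul t x y q.
Proof. by rewrite /emul mulr_sumr; apply: eq_bigr => k _; rewrite mulrA. Qed.

Lemma emul_subr a (x y1 y2 : elt) q :
  emul t x (fun q => y1 q - a * y2 q) q = emul t x y1 q - a * emul t x y2 q.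
Proof.
rewrite /emul mulr_sumr -sumrB; apply: eq_bigr => k _.
by rewrite mulrBr mulrCA.
Qed.

Lemma emul_subl a (x1 x2 y : elt) q :
  emul t (fun q => x1 q - a * x2 q) y q = emul t x1 y q - a * emul t x2 y q.
Proof.
rewrite /emul mulr_sumr -sumrB; apply: eq_bigr => k _.
by rewrite mulrBl mulrA.
Qed.

Lemma emul_extl (x x' y : elt) q : (forall q, x q = x' q) ->
  emul t x y q = emul t x' y q.
Proof. by move=> e; apply: eq_bigr => k _; rewrite e. Qed.

Lemma emul_extr (x y y' : elt) q : (forall q, y q = y' q) ->
  emul t x y q = emul t x y' q.
Proof. by move=> e; apply: eq_bigr => k _; rewrite e. Qed.

Lemma emul_vpl v p w r y q : endv t v p = w ->
  emul t (emul t (vpp v p) (vpp w r)) y q = emul t (vpp v (p ++ r)) y q.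
Proof. by move=> E; apply: emul_extl => q'; rewrite emul_vp E eqxx. Qed.

Lemma emul_vpl0 v p w r y q : endv t v p != w ->
  emul t (emul t (vpp v p) (vpp w r)) y q = 0.
Proof.
move=> E; rewrite (emul_extl _ (x' := fun _ => 0)).
  by rewrite /emul big1 // => k _; rewrite mul0r.
by move=> q'; rewrite emul_vp (negbTE E).
Qed.

Lemma endv_traj x k : endv t (t x) (traject g (g x) k) = t (iter k g x).
Proof. by elim: k x => //= k IH x; rewrite endv_cons IH -iterSr. Qed.

Lemma endv_Bw x : endv t (t x) (Bw x) = s x.
Proof.
rewrite /Bw endv_traj -Hsg -iterS prednK ?order_gt0 //.
by rewrite iter_order.
Qed.

Lemma endv_Aw x : endv t (t x) (Aw x) = s x.
Proof. by rewrite /endv /= -Hsf Hf3. Qed.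

Definition gen := (K * V * seq A * A * seq A)%type.
Definition gA (x : gen) : elt := fun q => x.1.1.1.1 * vpp x.1.1.1.2 x.1.1.2 q.
Definition gB (x : gen) : elt := vpp (s x.1.2) x.2.
Definition genval (x : gen) : elt := emul t (emul t (gA x) (dW t f g c x.1.2)) (gB x).

Lemma genval_eq (lam : K) v l x r q :
  genval (lam, v, l, x, r) q = if endv t v l == t x then
    lam * (vpp v (l ++ Aw x ++ r) q - c x * vpp v (l ++ Bw x ++ r) q) else 0.
Proof.
rewrite /genval /gA /gB /=.
rewrite (emul_extl _ (x' := fun q => lam * emul t (vpp v l) (dW t f g c x) q)); last first.
  by move=> q'; rewrite emul_scalel.
rewrite emul_scalel.
rewrite (emul_extl _ (x' := fun q => emul t (vpp v l) (vpp (t x) (Aw x)) q -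
     c x * emul t (vpp v l) (vpp (t x) (Bw x)) q)); last first.
  move=> q'; rewrite -emul_subr; apply: emul_extr => q''.
  by rewrite dW_eq.
rewrite emul_subl; case: eqP => E.
- rewrite !emul_vpl // ?endv_cat ?E ?endv_Aw ?endv_Bw //.
  by rewrite !emul_vp !endv_cat E endv_Aw endv_Bw !eqxx -!catA.
- have E2 : endv t v l != t x by apply/eqP.
  by rewrite !emul_vpl0 // mulr0 subrr mulr0.
Qed.

Definition evalg (G : seq gen) : elt := fun q => \sum_(x <- G) genval x q.

Lemma vp_elt v p : is_elt s t (vpp v p).
Proof.
move=> [v' p'] /= nv; rewrite /vp.
case E: ((v', p') == (v, p)); last by rewrite andbF.
by move/eqP: E nv => [-> ->] /negbTE ->.
Qed.

Lemma gA_elt x : is_elt s t (gA x).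
Proof. by move=> q nq; rewrite /gA vp_elt // mulr0. Qed.

Lemma ideal_evalg G : in_gen_ideal s t f g c (evalg G).
Proof.
case: G => [|d G'].
  have z : 'I_0 -> A by case=> k; rewrite ltn0.
  exists 0%N, (fun _ _ => 0), (fun _ _ => 0), z; split.
    by case=> k; rewrite ltn0.
  by move=> q; rewrite /evalg big_nil big_ord0.
exists (size (d :: G')), (fun k => gA (nth d (d :: G') k)),
  (fun k => gB (nth d (d :: G') k)), (fun k => (nth d (d :: G') k).1.2); split.
  by move=> k; split; [apply: gA_elt | apply: vp_elt].
by move=> q; rewrite /evalg (big_nth d) big_mkord.
Qed.

Definition approx N (x : elt) :=
  exists G : seq gen, forall q : V * seq A, (size q.2 < N)%N -> x q = evalg G q.

Lemma approx_jac x : (forall N, approx N x) -> in_jacobian_ideal s t f g c x.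
Proof.
move=> H n; case: (H n) => G HG; exists (evalg G); split => //.
exact: ideal_evalg.
Qed.

Lemma evalg_cat G1 G2 q : evalg (G1 ++ G2) q = evalg G1 q + evalg G2 q.
Proof. by rewrite /evalg big_cat. Qed.

Definition gscale a (x : gen) : gen := (a * x.1.1.1.1, x.1.1.1.2, x.1.1.2, x.1.2, x.2).

Lemma genval_scale a x q : genval (gscale a x) q = a * genval x q.
Proof.
rewrite /genval -emul_scalel; apply: emul_extl => q'.
rewrite -emul_scalel; apply: emul_extl => q''.
by rewrite /gA /= mulrA.
Qed.

Lemma evalg_scale a G q : evalg (map (gscale a) G) q = a * evalg G q.
Proof.
by rewrite /evalg big_map mulr_sumr; apply: eq_bigr => x _; rewrite genval_scale.
Qed.

Lemma approx_add N x y : approx N x -> approx N y -> approx N (fun q => x q + y q).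
Proof.
move=> [G1 H1] [G2 H2]; exists (G1 ++ G2) => q qn.
by rewrite evalg_cat H1 ?H2.
Qed.

Lemma approx_scale N a x : approx N x -> approx N (fun q => a * x q).
Proof. by move=> [G H]; exists (map (gscale a) G) => q qn; rewrite evalg_scale H. Qed.

Lemma approx_ext N x y : (forall q, x q = y q) -> approx N x -> approx N y.
Proof. by move=> e [G H]; exists G => q qn; rewrite -e H. Qed.

Lemma approx_evalg N G : approx N (evalg G).
Proof. by exists G. Qed.

Lemma approx_mono N M x : (M <= N)%N -> approx N x -> approx M x.
Proof. by move=> MN [G H]; exists G => q qn; apply: H; apply: leq_trans MN. Qed.

Lemma approx_small N x : (forall q, (size q.2 < N)%N -> x q = 0) -> approx N x.
Proof. by move=> H; exists [::] => q qn; rewrite H // /evalg big_nil. Qed.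

Definition swc (u w : seq A) (v0 : V) (q : V * seq A) :=
  [&& q.1 == v0, valid_from s t q.1 q.2, (size u + size w <= size q.2)%N,
      take (size u) q.2 == u & drop (size q.2 - size w) q.2 == w].

Definition swm (u w : seq A) (r : seq A) := drop (size u) (take (size r - size w) r).

Definition sw v0 (u w : seq A) (x : elt) : elt := fun q =>
  if swc u w v0 q then x (endv t v0 u, swm u w q.2) else 0.

Lemma swc_dec u w v0 q : swc u w v0 q -> q = (v0, u ++ swm u w q.2 ++ w).
Proof.
case: q => v' r /and5P [/= /eqP -> _ sz /eqP tu /eqP dw]; congr (_, _).
rewrite /swm -{1}tu -{2}dw catA.
have le : (size u <= size r - size w)%N by lia.
rewrite -{1}(take_takel _ le) cat_take_drop.
by rewrite cat_take_drop.
Qed.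

Lemma sw_vp v0 u w v p q : endv t v0 u = v -> sw v0 u w (vpp v p) q = vpp v0 (u ++ p ++ w) q.
Proof.
move=> ev; rewrite /sw.
case H: (q == (v0, u ++ p ++ w)).
- move/eqP: H => ->; rewrite /swc /swm /= eqxx /=.
  have -> : (size (u ++ p ++ w) - size w = size u + size p)%N by rewrite !size_cat; lia.
  rewrite !size_cat leq_add2l leq_addl take_size_cat // catA drop_size_cat ?size_cat //.
  rewrite take_size_cat ?size_cat // drop_size_cat // !eqxx /vp ev eqxx !andbT.
  rewrite !valid_cat ev.
  by rewrite eqxx andbT; case: (valid_from s t v0 u); case: (valid_from s t v p).
- rewrite {2}/vp H andbF; case C: (swc u w v0 q) => //.
  rewrite /vp; case E: ((endv t v0 u, swm u w q.2) == (v, p)); last by rewrite andbF.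
  move/eqP: E => [_ E]; move: (swc_dec C); rewrite E => e; by rewrite e eqxx in H.
Qed.

Definition gshift v0 (u w : seq A) (x : gen) : gen :=
  (if endv t v0 u == x.1.1.1.2 then x.1.1.1.1 else 0, v0, u ++ x.1.1.2, x.1.2, x.2 ++ w).

Lemma vp_ne v p e m : e != v -> vpp v p (e, m) = 0.
Proof. by move=> ne; rewrite /vp xpair_eqE (negbTE ne) andbF. Qed.

Lemma sw_genval v0 u w x q : sw v0 u w (genval x) q = genval (gshift v0 u w x) q.
Proof.
case: x => [[[[lam v] l] x] r]; rewrite /gshift /sw /= !genval_eq endv_cat.
case: (endv t v0 u =P v) => [ev|nev].
- rewrite ev; case: (endv t v l == t x); last by case: (swc _ _ _ _).
  have e1 p := sw_vp w p q ev; rewrite /sw ev in e1.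
  have -> : (u ++ l) ++ Aw x ++ r ++ w = u ++ (l ++ Aw x ++ r) ++ w by rewrite !catA.
  have -> : (u ++ l) ++ Bw x ++ r ++ w = u ++ (l ++ Bw x ++ r) ++ w by rewrite !catA.
  rewrite -!e1.
  by case: (swc _ _ _ _); rewrite ?mulr0 ?subrr ?mulr0.
- rewrite mul0r !if_same; case: (swc _ _ _ _); case: (endv t v l == t x) => //.
  by rewrite !vp_ne ?mulr0 ?subrr ?mulr0 //; apply/eqP.
Qed.

Lemma sw_evalg v0 u w G q : sw v0 u w (evalg G) q = evalg (map (gshift v0 u w) G) q.
Proof.
rewrite /evalg big_map -(eq_bigr _ (fun x _ => sw_genval v0 u w x q)).
rewrite /sw; case: (swc _ _ _ _) => //; by rewrite big1.
Qed.

Lemma size_swm u w r : (size u + size w <= size r)%N ->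
  size (swm u w r) = (size r - size u - size w)%N.
Proof. move=> h; rewrite /swm size_drop size_take; case: ltnP => ?; lia. Qed.

Lemma approx_sw N v0 u w x : approx N x -> approx (N + size u + size w) (sw v0 u w x).
Proof.
move=> [G H]; exists (map (gshift v0 u w) G) => q qn.
rewrite -sw_evalg /sw; case C: (swc _ _ _ _) => //.
have sz : (size u + size w <= size q.2)%N by case/and5P: C.
apply: H => /=; rewrite size_swm //; lia.
Qed.

Lemma approx_sw_vp N v0 u w v p : endv t v0 u = v -> approx N (vpp v p) ->
  approx (N + size u + size w) (vpp v0 (u ++ p ++ w)).
Proof.
move=> ev H; apply: approx_ext (approx_sw v0 u w H) => q.
exact: sw_vp.
Qed.


Lemma out2 a y : s y = t a -> y = f a \/ y = g a.
Proof.
move=> sy; have /cards2P [x1 [x2 [nx e]]] : #|[set z | s z == t a]| == 2 by rewrite Hout.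
have : f a \in [set z | s z == t a] by rewrite inE Hsf.
have : g a \in [set z | s z == t a] by rewrite inE Hsg.
have : y \in [set z | s z == t a] by rewrite inE sy.
rewrite e !inE => /orP [] /eqP Ey /orP [] /eqP Eg /orP [] /eqP Ef;
  move: (Hfg a) nx; rewrite Ey Eg Ef ?eqxx //; auto.
Qed.

Lemma g1 a : g a != a.
Proof. by apply: contraNneq (Hnl a) => e; rewrite -{1}e Hsg. Qed.

Lemma g2 a : g (g a) != a.
Proof.
apply/eqP => e; apply: (H2c (a := a) (b := g a)); split.
  by rewrite -{1}e Hsg.
by rewrite Hsg.
Qed.

Lemma order3 a : (3 <= order g a)%N.
Proof.
have := iter_order Hginj a; have := order_gt0 g a.
case: (order g a) => [|[|[|n]]] // _ /=.
  by move/eqP; rewrite (negbTE (g1 a)).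
by move/eqP; rewrite (negbTE (g2 a)).
Qed.

Definition Z1 a := [:: a; f a; g (f a)].
Definition gam a := f (f a).
Definition mm a := order g (gam a).
Definition eps a := iter (mm a).-1 g (gam a).
Definition alp a := iter (mm a - 2) g (gam a).
Definition del a := f (f (eps a)).
Definition uu a := traject g (g (gam a)) (mm a - 3).
Definition ww a := traject g (iter 3 g (del a)) (order g (del a) - 3).

Lemma endv_rcons v p x : endv t v (rcons p x) = t x.
Proof. by rewrite /endv map_rcons last_rcons. Qed.

Lemma t_gam a : t (gam a) = s a.
Proof. by rewrite /gam -Hsf Hf3. Qed.

Lemma g_eps a : g (eps a) = gam a.
Proof.
rewrite /eps /mm -iterS prednK ?order_gt0 //; exact: iter_order.
Qed.

Lemma f_eps a : f (eps a) = g (f a).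
Proof.
have : s (f (eps a)) = t (f a) by rewrite Hsf -Hsg g_eps /gam Hsf.
case/out2 => // E; move: (Hfg (eps a)); by rewrite E g_eps eqxx.
Qed.

Lemma f_del a : f (del a) = eps a.
Proof. by rewrite /del Hf3. Qed.

Lemma g_alp a : g (alp a) = eps a.
Proof.
rewrite /alp /eps -iterS; congr (iter _ g _); have := order3 (gam a).
rewrite /mm; lia.
Qed.

Lemma t_del a : t (del a) = t (alp a).
Proof. by rewrite /del -Hsf Hf3 -g_alp Hsg. Qed.

Lemma g_del a : g (del a) = f (alp a).
Proof.
have : s (g (del a)) = t (alp a) by rewrite Hsg t_del.
case/out2 => // E; move: (Hfg (del a)); by rewrite E g_alp f_del eqxx.
Qed.

Lemma Bw_gam a : Bw (gam a) = uu a ++ [:: alp a; eps a].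
Proof.
have m3 := order3 (gam a).
rewrite /Bw /uu -/(mm a).
have -> : (mm a).-1 = (mm a - 3 + 2)%N by rewrite /mm; lia.
rewrite trajectD /= -g_alp; congr (_ ++ [:: _; g _]);
  rewrite -iterSr /alp; congr (iter _ g _); rewrite /mm; lia.
Qed.

Lemma Bw_del a : Bw (del a) = [:: f (alp a); g (f (alp a))] ++ ww a.
Proof.
have m3 := order3 (del a).
rewrite /Bw /ww.
have -> : (order g (del a)).-1 = (2 + (order g (del a) - 3))%N by lia.
by rewrite trajectD /= g_del.
Qed.

Lemma Z1_step a q :
  vpp (s a) (Z1 a) q = genval (1, s a, [::], gam a, [:: g (f a)]) q
    + c (gam a) * (genval (1, s a, rcons (uu a) (alp a), del a, [::]) q
    + c (del a) * vpp (s a) (uu a ++ Z1 (alp a) ++ ww a) q).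
Proof.
rewrite !genval_eq /= t_gam endv_rcons t_del !eqxx !cats0 !mul1r Bw_gam Bw_del.
have E1 : [:: f (gam a); f (f (gam a)); g (f a)] = Z1 a by rewrite /gam !Hf3.
have E2 : (uu a ++ [:: alp a; eps a]) ++ [:: g (f a)] =
   rcons (uu a) (alp a) ++ [:: f (del a); f (f (del a))].
  by rewrite f_del -f_eps -cats1 -!catA.
have E3 : rcons (uu a) (alp a) ++ [:: f (alp a); g (f (alp a))] ++ ww a
   = uu a ++ Z1 (alp a) ++ ww a by rewrite -cats1 -!catA.
rewrite E1 E2 E3.
set X := vpp _ _ q; set Y := vpp _ _ q; set Z := vpp _ _ q.
by rewrite !subrK.
Qed.

Lemma approx_genval N x : approx N (genval x).
Proof.
apply: approx_ext (approx_evalg N [:: x]) => q.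
by rewrite /evalg big_cons big_nil addr0.
Qed.

Lemma endv_uu a : endv t (s a) (uu a) = s (alp a).
Proof.
rewrite -t_gam /uu endv_traj -Hsg -iterS /alp; congr (s (iter _ g _)).
have := order3 (gam a); rewrite /mm; lia.
Qed.

Lemma Z1_approx (star : forall a, (4 <= order g a)%N \/ (4 <= order g (f a))%N) N a :
  approx N (vpp (s a) (Z1 a)).
Proof.
elim: N a => [|N IH] a; first by apply: approx_small.
apply: approx_ext (fun q => esym (Z1_step a q)) _.
apply: approx_add; first exact: approx_genval.
apply: approx_scale; apply: approx_add; first exact: approx_genval.
apply: approx_scale.
apply: approx_mono (approx_sw_vp (ww a) (endv_uu a) (IH (alp a))).
rewrite /uu /ww !size_traject.
have h1 := order3 (gam a); have h2 := order3 (del a).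
have : order g (f (del a)) = mm a by rewrite f_del /eps order_iter.
case: (star (del a)) => h3 h4; rewrite /mm in h1 h4 *; lia.
Qed.

Lemma Bw_cons x : Bw x ++ [:: x] = g x :: Bw (g x).
Proof.
have E : traject g (g x) (order g x) = rcons (traject g (g x) (order g x).-1) x.
  by rewrite -{1}(prednK (order_gt0 g x)) trajectSr -iterSr prednK ?order_gt0 // iter_order.
by rewrite /Bw order_h // -trajectS prednK ?order_gt0 // cats1 E.
Qed.

Section Red.
Hypothesis ZJ : forall a N, approx N (vpp (s a) (Z1 a)).

Lemma P1_approx a N : approx N (vpp (s a) [:: a; f a; f (f a); a]).
Proof.
have n3 := order3 (f a).
have EB : Bw (f a) = g (f a) :: traject g (g (g (f a))) ((order g (f a)).-1.-1).
  by rewrite /Bw -trajectS prednK //; lia.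
have e q : vpp (s a) [:: a; f a; f (f a); a] q = genval (1, s a, [:: a; f a], f a, [::]) q
   + c (f a) * vpp (s a) (Z1 a ++ traject g (g (g (f a))) ((order g (f a)).-1.-1)) q.
  rewrite genval_eq /= eqxx mul1r cats0 /Aw Hf3 EB /=.
  by rewrite subrK.
apply: approx_ext (fun q => esym (e q)) _.
apply: approx_add; first exact: approx_genval.
apply: approx_scale.
have := approx_sw_vp (v0 := s a) (u := [::]) (traject g (g (g (f a))) ((order g (f a)).-1.-1)) (erefl _) (ZJ a N).
rewrite addn0 => /(approx_mono (leq_addr _ _)); apply: approx_ext => q.
by [].
Qed.

Lemma P2_approx a N : approx N (vpp (s a) [:: a; g a; f (g a); f (f (g a))]).
Proof.
have e q : vpp (s a) [:: a; g a; f (g a); f (f (g a))] q =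
   vpp (s a) [:: a; f a; f (f a); a] q - genval (1, s a, [:: a], a, [:: a]) q
   + genval (1, s a, [:: a; g a], g a, [::]) q.
  rewrite !genval_eq /= !eqxx !mul1r !cats0 /Aw /=.
  rewrite Bw_cons.
  rewrite Hc.
  set X := vpp _ _ q; set Y := vpp _ _ q; set Z := vpp _ _ q.
  ring.
apply: approx_ext (fun q => esym (e q)) _.
apply: approx_add; last exact: approx_genval.
apply: approx_add; first exact: P1_approx.
have := approx_scale (-1) (approx_genval N (1, s a, [:: a], a, [:: a])).
by apply: approx_ext => q; rewrite mulN1r.
Qed.

Lemma P3_approx a N :
  approx N (vpp (s a) [:: g (f (f a)); f (g (f (f a))); f (f (g (f (f a)))); a]).
Proof.
set d := g (f (f a)).
have sd : s d = s a by rewrite /d Hsg -/(gam a) t_gam.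
have e q : vpp (s a) [:: d; f d; f (f d); a] q =
   genval (1, s a, [:: d], d, [:: a]) q - genval (1, s a, [::], f (f a), [:: f (f a); a]) q
   + vpp (s a) [:: a; f a; f (f a); a] q.
  rewrite !genval_eq /= -/(gam a) t_gam !eqxx !mul1r /Aw /gam !Hf3 /=. 
  have -> : Bw (f (f a)) ++ [:: f (f a); a] = d :: Bw d ++ [:: a].
    by rewrite -[[:: f (f a); a]]cat1s catA Bw_cons.
  rewrite /d Hc; ring.
apply: approx_ext (fun q => esym (e q)) _.
apply: approx_add; last exact: P1_approx.
apply: approx_add; first exact: approx_genval.
have := approx_scale (-1) (approx_genval N (1, s a, [::], f (f a), [:: f (f a); a])).
by apply: approx_ext => q; rewrite mulN1r.
Qed.

Lemma final1 al be :
  in_jacobian_ideal s t f g c (emul t (pathel K (s al) [:: al]) (zrep K s f be)).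
Proof.
apply: approx_jac => N.
have e q : emul t (pathel K (s al) [:: al]) (zrep K s f be) q =
   if t al == s be then vpp (s al) [:: al; be; f be; f (f be)] q else 0.
  rewrite (emul_extl _ (x' := vpp (s al) [:: al])); last first.
    by move=> q'; rewrite pathel_vp //= eqxx.
  rewrite (emul_extr _ (y' := vpp (s be) [:: be; f be; f (f be)])); last first.
    by move=> q'; rewrite /zrep pathel_vp //= !Hsf !eqxx.
  by rewrite emul_vp.
apply: approx_ext (fun q => esym (e q)) _.
case: (t al =P s be) => [E|_]; last by apply: approx_small.
have [->|->] := out2 (esym E).
- by have := P1_approx al N; rewrite Hf3.
- exact: P2_approx.
Qed.

Lemma final2 al be :
  in_jacobian_ideal s t f g c (emul t (zrep K s f be) (pathel K (s al) [:: al])).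
Proof.
apply: approx_jac => N.
have e q : emul t (zrep K s f be) (pathel K (s al) [:: al]) q =
   if s be == s al then vpp (s be) [:: be; f be; f (f be); al] q else 0.
  rewrite (emul_extl _ (x' := vpp (s be) [:: be; f be; f (f be)])); last first.
    by move=> q'; rewrite /zrep pathel_vp //= !Hsf !eqxx.
  rewrite (emul_extr _ (y' := vpp (s al) [:: al])); last first.
    by move=> q'; rewrite pathel_vp //= eqxx.
  by rewrite emul_vp /endv /= -/(gam be) t_gam.
apply: approx_ext (fun q => esym (e q)) _.
case: (s be =P s al) => [E|_]; last by apply: approx_small.
have : s be = t (f (f al)) by rewrite -/(gam al) t_gam.
case/out2 => ->; rewrite ?Hf3.
- exact: P1_approx.
- rewrite Hsg -/(gam al) t_gam; exact: P3_approx.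
Qed.

End Red.

Lemma diamond_ZJ : (forall a, order g a = 3%N) ->
  \prod_(b | froot g b == b) c b != 1 -> forall a N, approx N (vpp (s a) (Z1 a)).
Proof.
move=> H3 Hp a N.
have Hg3 x : g (g (g x)) = x by have := iter_order Hginj x; rewrite H3.
have Hm b : mm b = 3%N by rewrite /mm H3.
have Ea b : alp b = g (f (f b)) by rewrite /alp Hm.
have salp b : s (alp b) = s b by rewrite Ea Hsg -/(gam b) t_gam.
have aa b : alp (alp b) = b.
  have : s b = t (f (f (alp b))) by rewrite -/(gam (alp b)) t_gam salp.
  case/out2; rewrite ?Hf3 => E; last by rewrite {2}E Ea.
  by move: (Hfg (f (f b))); rewrite Hf3 -Ea -E eqxx.
have step b q : vpp (s b) (Z1 b) q = genval (1, s b, [::], gam b, [:: g (f b)]) q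
    + c (gam b) * (genval (1, s b, rcons (uu b) (alp b), del b, [::]) q
    + c (del b) * vpp (s b) (Z1 (alp b)) q).
  by rewrite Z1_step /uu /ww Hm H3 /=.
set a' := alp a.
set lam1 := c (gam a) * c (del a); set lam2 := c (gam a') * c (del a').
have HL : lam1 * lam2 = \prod_(b | froot g b == b) c b.
  rewrite (prod_reps Hf3 Hg3 Hnl Hsf Hsg Hfg Hout H3 Hconn Hc a).
  rewrite /lam1 /lam2 /a' /del /eps /bw1 /bw2 /bw3 /bw4 !Ea /gam !Hm /=.
  by rewrite !mulrA.
set E1 := fun q => genval (1, s a, [::], gam a, [:: g (f a)]) q
    + c (gam a) * genval (1, s a, rcons (uu a) (alp a), del a, [::]) q.
set E2 := fun q => genval (1, s a', [::], gam a', [:: g (f a')]) q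
    + c (gam a') * genval (1, s a', rcons (uu a') (alp a'), del a', [::]) q.
have nz : 1 - lam1 * lam2 != 0 by rewrite subr_eq0 eq_sym HL.
have e q : vpp (s a) (Z1 a) q = (1 - lam1 * lam2)^-1 * (E1 q + lam1 * E2 q).
  apply: (mulfI nz); rewrite mulVKf //.
  have h1 := step a q; have h2 := step a' q.
  rewrite /a' aa salp in h2.
  rewrite /E1 /E2 /lam1 /lam2 /a'.
  move: h1 h2; set X := vpp (s a) (Z1 a) q; set Y := vpp (s a) (Z1 (alp a)) q.
  move=> h1 h2; rewrite mulrBl mul1r {1}h1 h2 !salp aa; ring.
apply: approx_ext (fun q => esym (e q)) _.
apply: approx_scale; apply: approx_add.
  by apply: approx_add; [exact: approx_genval | apply: approx_scale; exact: approx_genval].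
apply: approx_scale.
by apply: approx_add; [exact: approx_genval | apply: approx_scale; exact: approx_genval].
Qed.

Lemma main_in :
  ((forall a : A, (4 <= order g a)%N \/ (4 <= order g (f a))%N)
   \/ ((forall a : A, order g a = 3%N) /\ \prod_(b | froot g b == b) c b != 1)) ->
  forall (al be : A),
    in_jacobian_ideal s t f g c (emul t (pathel K (s al) [:: al]) (zrep K s f be)) /\
    in_jacobian_ideal s t f g c (emul t (zrep K s f be) (pathel K (s al) [:: al])).
Proof.
move=> H al be.
have ZJ : forall a N, approx N (vpp (s a) (Z1 a)).
  case: H => [st|[d p]] a N; [exact: Z1_approx | exact: diamond_ZJ].
by split; [apply: final1 | apply: final2].
Qed.

End DW.

Theorem lemma4p6 (K : fieldType) (V A : finType) (s t : A -> V)
    (f g : A -> A) (c : A -> K) :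
  quiver_setting s t f g c ->
  ((* (star) *) (forall a : A, (4 <= order g a)%N \/ (4 <= order g (f a))%N)
   \/ ((* (diamond) *) (forall a : A, order g a = 3%N) /\
       \prod_(b | froot g b == b) c b != 1)) ->
  forall (i : V) (be al : A), s be = i ->
    in_jacobian_ideal s t f g c (emul t (pathel K (s al) [:: al]) (zrep K s f be)) /\
    in_jacobian_ideal s t f g c (emul t (zrep K s f be) (pathel K (s al) [:: al])).
Proof.
move=> [conn nl n2 card [fi gi fg f3 cp]] H i be al _.
have Hsf a : s (f a) = t a by case: (fg a).
have Hsg a : s (g a) = t a by case: (fg a).
have Hfg a : f a != g a by case: (fg a).
have Hc a : c (g a) = c a by case: (cp a).
have Hout v : #|[set a | s a == v]| = 2 by case: (card v).
exact: (main_in f3 gi nl Hsf Hsg Hfg Hc Hout n2 conn H).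
Qed.
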